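(* Let $k\ge 3$ and let $n$ be sufficiently large. Define $f(n,k)=\frac{n}{k}$ if $n$ is even and $f(n,k)=\frac{n-1}{2k}$ if $n$ is odd. If $n$ is even, then $f(n,k)\cdot\mathsf{m}(k-1) \le N(BM,k,n) \le N(GM,k,n)$. If $n$ is odd, then $f(n,k)\cdot\mathsf{m}(k-1) \le N(GM,k,n)$ and $f(n,k)\cdot \mathsf{m}(k-2) \le N(BM,k,n)$.
   Context: We are given $n$ balls, the set $[n]=\{1,\dots,n\}$, each colored with one of two colors by an unknown coloring. A ball $i$ is a majority ball if more than $n/2$ balls have the same color as $i$. A query is a subset $Q\subseteq[n]$ with $|Q|=k$. In the General (Yes-No) Model (GM), the answer to a query $Q$ is YES if $Q$ contains two balls of different colors and NO otherwise. In Borzyszkowski's Model (BM), the answer is YES together with a pair of balls of $Q$ having different colors (the pair may be any such pair) if such a pair exists, and NO if all balls of $Q$ have the same color. A non-adaptive strategy is a family of queries $Q_1,\dots,Q_q$ fixed in advance. It succeeds if for every coloring and every admissible sequence of answers, the answers determine the outcome: either every coloring consistent with the answers has no majority ball, or there is a ball that is a majority ball in every coloring consistent with the answers. $N(GM,k,n)$ and $N(BM,k,n)$ denote the minimum number of queries in a successful non-adaptive strategy in the respective model. A hypergraph has Property B if its vertices can be 2-colored with no monochromatic edge. For $k\ge 1$, $\mathsf{m}(k)$ is the minimum number of edges of a $k$-uniform hypergraph that does not have Property B. *)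

(* Defs.v *)
From mathcomp Require Import all_boot all_order all_algebra.
Set Implicit Arguments. Unset Strict Implicit. Unset Printing Implicit Defensive.
Import Order.TTheory GRing.Theory Num.Theory.

Definition coloring (n : nat) := {ffun 'I_n -> bool}.

Definition majority (n : nat) (c : coloring n) (i : 'I_n) : Prop :=
  n < 2 * #|[set j | c j == c i]|.

Definition determined (n : nat) (S : coloring n -> Prop) : Prop :=
  (forall c, S c -> forall i, ~ majority c i) \/
  (exists i, forall c, S c -> majority c i).

Definition bichromatic (n : nat) (c : coloring n) (Q : {set 'I_n}) : bool :=
  [exists x in Q, exists y in Q, c x != c y].

Definition admGM (n : nat) (c : coloring n) (Q : {set 'I_n}) (a : bool) : bool :=
  a == bichromatic c Q.

(* BM: NO (None) if Q monochromatic; YES with a pair Some (x,y) of balls of Q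
   with different colors (any such pair). *)
Definition admBM (n : nat) (c : coloring n) (Q : {set 'I_n})
    (a : option ('I_n * 'I_n)) : bool :=
  match a with
  | None => ~~ bichromatic c Q
  | Some (x, y) => [&& x \in Q, y \in Q & c x != c y]
  end.

(* Generic success of a non-adaptive strategy Qs of k-subsets,
   for a model given by its answer type A and admissibility relation adm. *)
Definition successful {A : Type} {n : nat} (k : nat)
    (adm : coloring n -> {set 'I_n} -> A -> bool) (Qs : seq {set 'I_n}) : Prop :=
  (forall Q, Q \in Qs -> #|Q| = k) /\
  forall (c : coloring n) (ans : seq A), all2 (adm c) Qs ans ->
    determined (fun c' => all2 (adm c') Qs ans).

Definition successful_GM (n k : nat) := successful k (@admGM n).
Definition successful_BM (n k : nat) := successful k (@admBM n).

Definition is_min_queries {n : nat} (succ : seq {set 'I_n} -> Prop) (q : nat) : Prop :=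
  (exists Qs, succ Qs /\ size Qs = q) /\
  (forall Qs, succ Qs -> q <= size Qs).

Definition is_N_GM (k n q : nat) : Prop := is_min_queries (@successful_GM n k) q.
Definition is_N_BM (k n q : nat) : Prop := is_min_queries (@successful_BM n k) q.

Definition propertyB (v : nat) (E : {set {set 'I_v}}) : Prop :=
  exists col : 'I_v -> bool,
    forall e, e \in E -> ~ (forall x y, x \in e -> y \in e -> col x = col y).

Definition uniform (v k : nat) (E : {set {set 'I_v}}) : Prop :=
  forall e, e \in E -> #|e| = k.

Definition is_m (k q : nat) : Prop :=
  (exists v (E : {set {set 'I_v}}), uniform k E /\ ~ propertyB E /\ #|E| = q) /\
  (forall v (E : {set {set 'I_v}}), uniform k E -> ~ propertyB E -> q <= #|E|).

Definition f (n k : nat) : rat :=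
  if ~~ odd n then (n%:R / k%:R)%R else ((n%:R - 1) / (2 * k%:R))%R.

(* Main.v *)
Require Import Defs.
From mathcomp Require Import all_boot all_order all_algebra.
From mathcomp Require Import zify.
From Stdlib Require Import Classical.
Set Implicit Arguments. Unset Strict Implicit. Unset Printing Implicit Defensive.
Import Order.TTheory GRing.Theory Num.Theory.

Definition pre {n : nat} (m : nat) (A : {set 'I_n}) : {set 'I_n} :=
  [set:: take m (enum A)].

Lemma pre_sub n m (A : {set 'I_n}) : pre m A \subset A.
Proof.
apply/subsetP => j; rewrite /pre inE => /mem_take; by rewrite mem_enum.
Qed.

Lemma card_pre n m (A : {set 'I_n}) : m <= #|A| -> #|pre m A| = m.
Proof.
move=> hm; rewrite /pre cardsE.
have u : uniq (take m (enum A)) by apply: take_uniq; apply: enum_uniq.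
rewrite (card_uniqP u) size_takel //; by rewrite -cardE.
Qed.

Lemma balance n (U : {set 'I_n}) (c0 : 'I_n -> bool) t :
  #|U| <= t -> t <= n - #|U| ->
  exists c : coloring n, {in U, forall u, c u = c0 u} /\ #|[set j | c j]| = t.
Proof.
move=> h1 h2.
set T0 := [set u in U | c0 u].
have hT0 : #|T0| <= #|U| by apply: subset_leq_card; apply/subsetP => u; rewrite inE => /andP[].
have hC : t - #|T0| <= #|~: U|.
  have := cardsC U; rewrite card_ord; lia.
set S := pre (t - #|T0|) (~: U).
exists [ffun j => (j \in T0) || (j \in S)]; split.
  move=> u hu; rewrite ffunE inE hu /=.
  case: (c0 u) => //=; apply/negbTE; apply/negP => hs.
  by move/subsetP: (pre_sub (t - #|T0|) (~: U)) => /(_ u hs); rewrite inE hu.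
have -> : [set j | [ffun j0 => (j0 \in T0) || (j0 \in S)] j] = T0 :|: S.
  by apply/setP => j; rewrite in_setU in_set ffunE.
have dis : T0 :&: S = set0.
  apply/setP => j; rewrite in_setI in_set0; apply/negP => /andP[]; rewrite in_set => /andP[hu _] hs.
  by move/subsetP: (pre_sub (t - #|T0|) (~: U)) => /(_ j hs); rewrite inE hu.
have := cardsUI T0 S; rewrite dis cards0 addn0 => ->.
rewrite /S card_pre //.
have : #|T0| <= t by lia.
lia.
Qed.

Definition flip n (c : coloring n) (x : 'I_n) : coloring n :=
  [ffun j => if j == x then ~~ c j else c j].

Lemma bichro_eq n (c1 c2 : coloring n) (Q : {set 'I_n}) :
  {in Q, forall u, c1 u = c2 u} -> bichromatic c1 Q = bichromatic c2 Q.
Proof.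
move=> h; rewrite /bichromatic; apply: eq_existsb => x.
case hx: (x \in Q) => //=; apply: eq_existsb => y.
case hy: (y \in Q) => //=; by rewrite !h.
Qed.

Lemma bichro_sub n (c : coloring n) (A B : {set 'I_n}) :
  A \subset B -> bichromatic c A -> bichromatic c B.
Proof.
move=> /subsetP s /existsP[x /andP[hx /existsP[y /andP[hy d]]]].
apply/existsP; exists x; rewrite (s x hx); apply/existsP; exists y; by rewrite (s y hy).
Qed.

Lemma bichro_col n (c : coloring n) (col : 'I_n -> bool) (g : 'I_n -> 'I_n) (A : {set 'I_n}) :
  ~ (forall x y, x \in g @: A -> y \in g @: A -> col x = col y) ->
  {in A, forall u, c u = col (g u)} -> bichromatic c A.
Proof.
move=> hn hc; case: (boolP (bichromatic c A)) => // /existsPn H; exfalso; apply: hn.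
move=> a b /imsetP[x hx ->] /imsetP[y hy ->].
move: (H x); rewrite hx /= => /existsPn /(_ y); rewrite hy /= negbK => /eqP.
by rewrite !hc.
Qed.

Lemma all2_map_r A B (r : A -> B -> bool) (s : seq A) (g : A -> B) :
  all2 r s (map g s) = all (fun a => r a (g a)) s.
Proof. by elim: s => //= a s ->. Qed.

Lemma all2_mapP A B B' (r : A -> B -> bool) (r' : A -> B' -> bool) (g : B -> B') s t :
  (forall a b, r a b -> r' a (g b)) -> all2 r s t -> all2 r' s (map g t).
Proof.
move=> h; elim: s t => [|a s IH] [|b t] //= /andP[h1 h2]; by rewrite h // IH.
Qed.

Lemma GM_self n (c : coloring n) (Qs : seq {set 'I_n}) :
  all2 (admGM c) Qs (map (bichromatic c) Qs).
Proof. rewrite all2_map_r; apply/allP => Q _; exact: eqxx. Qed.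

Lemma GM_flip n (c : coloring n) x (Qs : seq {set 'I_n}) :
  (forall Q, Q \in Qs -> x \in Q -> bichromatic c (Q :\ x)) ->
  all2 (admGM (flip c x)) Qs (map (bichromatic c) Qs).
Proof.
move=> h; rewrite all2_map_r; apply/allP => Q hQ; rewrite /admGM; apply/eqP.
case hx: (x \in Q).
  have b1 := h Q hQ hx.
  have b2 : bichromatic (flip c x) (Q :\ x).
    rewrite (@bichro_eq _ _ c) // => u; rewrite !inE ffunE => /andP[/negbTE -> _] //.
  by rewrite (bichro_sub (subsetDl Q [set x]) b1) (bichro_sub (subsetDl Q [set x]) b2).
apply: bichro_eq => u hu; rewrite ffunE; case: eqP => // e; by rewrite e hx in hu.
Qed.

Definition ansBM n (c : coloring n) (X Q : {set 'I_n}) : option ('I_n * 'I_n) :=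
  match [pick p : 'I_n * 'I_n | [&& p.1 \in Q :\: X, p.2 \in Q :\: X & c p.1 != c p.2]] with
  | Some p => Some p
  | None => [pick p : 'I_n * 'I_n | [&& p.1 \in Q, p.2 \in Q & c p.1 != c p.2]]
  end.

Lemma admBM_eq n (c1 c2 : coloring n) (Q : {set 'I_n}) a :
  {in Q, forall u, c1 u = c2 u} -> admBM c1 Q a = admBM c2 Q a.
Proof.
move=> h; case: a => [[u v]|] /=; last by rewrite (bichro_eq h).
case hu: (u \in Q) => //; case hv: (v \in Q) => //=; by rewrite !h.
Qed.

Lemma BM_self n (c : coloring n) (X Q : {set 'I_n}) : admBM c Q (ansBM c X Q).
Proof.
rewrite /ansBM; case: pickP => [[u v]|_] /=.
  by rewrite !in_setD => /and3P[/andP[_ ->] /andP[_ ->] ->].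
case: pickP => [[u v]|H] //=.
apply/negP => /existsP[u /andP[hu /existsP[v /andP[hv d]]]].
by move: (H (u, v)); rewrite /= hu hv d.
Qed.

Lemma BM_flip n (c : coloring n) x (X : {set 'I_n}) (Qs : seq {set 'I_n}) :
  x \in X ->
  (forall Q, Q \in Qs -> x \in Q -> bichromatic c (Q :\: X)) ->
  all2 (admBM (flip c x)) Qs (map (ansBM c X) Qs).
Proof.
move=> hX h; rewrite all2_map_r; apply/allP => Q hQ.
case hx: (x \in Q); last first.
  rewrite (@admBM_eq _ _ c); first exact: BM_self.
  move=> u hu; rewrite ffunE; case: eqP => // e; by rewrite e hx in hu.
have := h Q hQ hx => /existsP[u /andP[hu /existsP[v /andP[hv d]]]].
rewrite /ansBM; case: pickP => [[a b]|H]; last by move: (H (u, v)); rewrite /= hu hv d.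
rewrite /= !in_setD => /and3P[/andP[ha qa] /andP[hb qb] dab].
rewrite qa qb !ffunE /=.
have -> : (a == x) = false by apply/negbTE; apply: contraNneq ha => ->.
by have -> : (b == x) = false by apply/negbTE; apply: contraNneq hb => ->.
Qed.

Definition deg n (Qs : seq {set 'I_n}) (x : 'I_n) : nat := count (fun Q : {set 'I_n} => x \in Q) Qs.

Lemma sum_deg n k (Qs : seq {set 'I_n}) :
  (forall Q, Q \in Qs -> #|Q| = k) -> \sum_x deg Qs x = k * size Qs.
Proof.
elim: Qs => [|Q Qs IH] h.
  by rewrite muln0 big1.
rewrite /deg /= big_split /= -/(deg _) IH; last by move=> Q' hQ'; apply: h; rewrite inE hQ' orbT.
have -> : \sum_(i < n) (i \in Q) = #|Q|.
  rewrite -sum1_card [RHS]big_mkcond /=; apply: eq_bigr => i _; by case: (i \in Q).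
have := h Q (mem_head _ _); lia.
Qed.

Definition bigU n (s : seq {set 'I_n}) : {set 'I_n} := \bigcup_(Q <- s) Q.

Lemma card_bigU n k (s : seq {set 'I_n}) :
  (forall Q, Q \in s -> #|Q| = k) -> #|bigU s| <= k * size s.
Proof.
elim: s => [|Q s IH] h; first by rewrite /bigU big_nil cards0.
rewrite /bigU big_cons -/(bigU s) /=.
have := IH (fun Q' hQ' => h Q' (@mem_behead _ (Q :: s) _ hQ')).
have := h Q (mem_head _ _).
have := cardsUI Q (bigU s). move=> e1 e2 e3; apply: (@leq_trans (#|Q| + #|bigU s|)); first by rewrite -e1; exact: leq_addr.
by rewrite mulnS e2 leq_add2l.
Qed.

Lemma sub_bigU n (s : seq {set 'I_n}) Q : Q \in s -> Q \subset bigU s.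
Proof.
elim: s => [|Q' s IH] //; rewrite inE => /orP[/eqP ->|hQ]; rewrite /bigU big_cons.
  exact: subsetUl.
apply: subset_trans (IH hQ) _; exact: subsetUr.
Qed.

Lemma GM_to_BM n k (Qs : seq {set 'I_n}) : successful_GM k Qs -> successful_BM k Qs.
Proof.
case=> h1 h2; split => // c ans hc.
have key : forall c', all2 (admBM c') Qs ans -> all2 (admGM c') Qs (map isSome ans).
  move=> c'; apply: all2_mapP => Q [[u v]|] /=.
    move=> /and3P[hu hv d]; rewrite /admGM; apply/eqP; apply/esym/existsP; exists u.
    by rewrite hu; apply/existsP; exists v; rewrite hv.
  by rewrite /admGM => /negbTE ->.
case: (h2 c _ (key c hc)) => [H|[i H]]; [left|right].
  move=> c' hc'; exact: H _ (key c' hc').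
by exists i => c' hc'; apply: H; apply: key.
Qed.

Lemma cls_compl n (c : coloring n) b :
  #|[set j | c j == b]| + #|[set j | c j == ~~ b]| = n.
Proof.
have -> : [set j | c j == ~~ b] = ~: [set j | c j == b].
  by apply/setP => j; rewrite !inE; case: (c j); case: b.
by rewrite cardsC card_ord.
Qed.

Lemma odd_witness n h (c : coloring n) x i :
  n = h.*2.+1 -> #|[set j | c j == c x]| = h.+1 ->
  majority c i -> majority (flip c x) i -> i = x.
Proof.
move=> hn hx; rewrite /majority => m1 m2.
have ci : c i = c x.
  apply/eqP; apply/negP => d.
  have e : c i = ~~ c x by move: d; case: (c i); case: (c x).
  move: m1; rewrite e; have := cls_compl c (c x); rewrite hx; lia.
apply/eqP; apply/negP => /negP d.
have fi : flip c x i = c x by rewrite ffunE (negbTE d) ci.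
move: m2; rewrite fi.
have -> : [set j | flip c x j == c x] = [set j | c j == c x] :\ x.
  apply/setP => j; rewrite !inE ffunE; case: (j =P x) => [->|_] /=; last by [].
  by case: (c x).
have := cardsD1 x [set j | c j == c x]; rewrite inE eqxx /= hx; lia.
Qed.

Lemma odd_major n h (c : coloring n) x :
  n = h.*2.+1 -> #|[set j | c j == c x]| = h.+1 -> majority c x.
Proof. move=> hn hx; rewrite /majority hx; lia. Qed.

Lemma even_nomaj n h (c : coloring n) i :
  n = h.*2 -> #|[set j | c j]| = h -> ~ majority c i.
Proof.
move=> hn ht; rewrite /majority.
have e : forall b, #|[set j | c j == b]| = h.
  have ht' : #|[set j | c j == true]| = h.
    by rewrite -ht; apply: eq_card => j; rewrite !inE eqb_id.
  have := cls_compl c true; rewrite ht' /= => hc.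
  case => //; lia.
rewrite e; lia.
Qed.

Lemma even_flipmaj n h (c : coloring n) x :
  n = h.*2 -> #|[set j | c j]| = h -> majority (flip c x) x.
Proof.
move=> hn ht; rewrite /majority.
have e : forall b, #|[set j | c j == b]| = h.
  have ht' : #|[set j | c j == true]| = h.
    by rewrite -ht; apply: eq_card => j; rewrite !inE eqb_id.
  have := cls_compl c true; rewrite ht' /= => hc.
  case => //; lia.
have -> : [set j | flip c x j == flip c x x] = x |: [set j | c j == ~~ c x].
  apply/setP => j; rewrite !inE !ffunE eqxx; case: (j =P x) => [->|_] /=; first by rewrite eqxx.
  by [].
rewrite cardsU1 inE; case: (c x) => /=; rewrite e; lia.
Qed.

Lemma one_min n k m (Qs : seq {set 'I_n}) : 0 < n ->
  (forall Q, Q \in Qs -> #|Q| = k) -> k * size Qs < n * m -> exists x, deg Qs x < m.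
Proof.
move=> n0 hsz hlt.
pose x0 : 'I_n := Ordinal n0.
case: (arg_minnP (deg Qs) (erefl (predT x0))) => x _ hx.
exists x.
have : \sum_(j : 'I_n) deg Qs x <= \sum_j deg Qs j by apply: leq_sum => j _; apply: hx.
rewrite (sum_deg hsz) sum_nat_const card_ord => hle.
have : n * deg Qs x < n * m by apply: leq_ltn_trans hle hlt.
by rewrite ltn_pmul2l.
Qed.

Lemma two_min n k m (Qs : seq {set 'I_n}) : 1 < n ->
  (forall Q, Q \in Qs -> #|Q| = k) -> 2 * (k * size Qs) < n.-1 * m ->
  exists x y, x != y /\ deg Qs x + deg Qs y < m.
Proof.
move=> n1 hsz hlt.
have n0 : 0 < n by lia.
pose x0 : 'I_n := Ordinal n0.
case: (arg_minnP (deg Qs) (erefl (predT x0))) => x _ hx.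
have : 0 < #|predC1 x| by rewrite cardC1 card_ord; lia.
case/card_gt0P => y0 hy0.
case: (@arg_minnP _ y0 (predC1 x) (deg Qs) hy0) => y hy hmin.
exists x, y; split; first by rewrite eq_sym.
have S := sum_deg hsz.
rewrite (bigD1 x) //= in S.
have : \sum_(j | j != x) deg Qs y <= \sum_(j | j != x) deg Qs j
  by apply: leq_sum => j hj; apply: hmin.
rewrite sum_nat_const cardC1 card_ord => hle.
have hxy := hx y isT.
set R := \sum_(i < n | i != x) deg Qs i in S hle.
have h1 : (n - 2) * deg Qs x <= (n - 2) * deg Qs y by apply: leq_mul.
have h2 : n * (deg Qs x + deg Qs y) < n.-1 * m by nia.
have h3 : n * (deg Qs x + deg Qs y) < n * m.
  apply: (leq_trans h2); apply: leq_mul => //; lia.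
by rewrite ltn_pmul2l in h3.
Qed.

Lemma card_setseq n (s : seq {set 'I_n}) : #|[set:: s]| <= size s.
Proof. rewrite cardsE; exact: card_size. Qed.

Lemma even_BM n k m1 (Qs : seq {set 'I_n}) :
  0 < k -> ~~ odd n -> 2 + 2 * (k * m1) <= n ->
  (forall v (E : {set {set 'I_v}}), uniform k.-1 E -> ~ propertyB E -> m1 <= #|E|) ->
  successful_BM k Qs -> n * m1 <= k * size Qs.
Proof.
move=> k0 ev hn hm [hsz hdet].
rewrite leqNgt; apply/negP => hlt.
have [x hx] := @one_min n k m1 Qs ltac:(lia) hsz hlt.
set Fx := filter (fun Q : {set 'I_n} => x \in Q) Qs.
have hFx : forall Q, Q \in Fx -> #|Q| = k by move=> Q; rewrite mem_filter => /andP[_ /hsz].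
set E : {set {set 'I_n}} := [set:: map (fun Q => Q :\ x) Fx].
have hE : #|E| < m1.
  apply: leq_ltn_trans (card_setseq _) _; rewrite size_map size_filter; exact hx.
have hu : uniform k.-1 E.
  move=> e; rewrite in_set => /mapP[Q]; rewrite mem_filter => /andP[xQ QQ] ->.
  have := cardsD1 x Q; rewrite xQ (hsz Q QQ) /= => ->; by rewrite add1n.
have [col hcol] : propertyB E.
  apply: NNPP => hn'; have := hm _ _ hu hn'; lia.
set U := x |: bigU Fx.
have hU : #|U| <= 1 + k * deg Qs x.
  rewrite cardsU1; have := card_bigU hFx; rewrite size_filter -/(deg Qs x).
  case: (x \notin bigU Fx) => /= hb; first by rewrite leq_add2l.
  by rewrite add0n; apply: leq_trans hb _; exact: leq_addl.
have hkd : k * deg Qs x <= k * m1 by rewrite leq_mul2l; apply/orP; right; lia.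
set h := n./2.
have hn2 : n = h.*2 by have := odd_double_half n; rewrite (negbTE ev).
have hU1 : #|U| <= h by apply: leq_trans hU _; lia.
have hU2 : h <= n - #|U|.
  apply: leq_trans (leq_sub2l n hU1); lia.
have [c [hc ht]] := @balance n U col h hU1 hU2.
have hb : forall Q, Q \in Qs -> x \in Q -> bichromatic c (Q :\ x).
  move=> Q hQ xQ.
  have QF : Q \in Fx by rewrite mem_filter xQ hQ.
  apply: (@bichro_col _ _ col (fun u => u)).
    have -> : [set (fun u => u) u | u in Q :\ x] = Q :\ x by apply: imset_id.
    by apply: hcol; rewrite in_set; apply/mapP; exists Q.
  move=> u hu0; apply: hc; rewrite in_setU1; apply/orP; right.
  apply: (subsetP (sub_bigU QF)); exact: (subsetP (subsetDl Q [set x]) _ hu0).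
have := hdet c (map (ansBM c [set x]) Qs) _.
case.
- by rewrite all2_map_r; apply/allP => Q _; exact: BM_self.
- move=> H; apply: (H (flip c x) _ x); first exact: BM_flip (set11 x) hb.
  exact: even_flipmaj hn2 ht.
- move=> [i H]; apply: (even_nomaj hn2 ht (i:=i)); apply: H.
  by rewrite all2_map_r; apply/allP => Q _; exact: BM_self.
Qed.

Lemma odd_conclude n h (c : coloring n) x y (S : coloring n -> Prop) :
  x != y -> n = h.*2.+1 -> #|[set j | c j == c x]| = h.+1 -> c y = c x ->
  S c -> S (flip c x) -> S (flip c y) -> determined S -> False.
Proof.
move=> xy hn hx cy S0 Sx Sy [H|[i H]].
  exact: (H c S0 x (odd_major hn hx)).
have hy : #|[set j | c j == c y]| = h.+1 by rewrite cy.
have ix := odd_witness hn hx (H c S0) (H _ Sx).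
have iy := odd_witness hn hy (H c S0) (H _ Sy).
by move: xy; rewrite -ix -iy eqxx.
Qed.

Lemma odd_balance n h (U : {set 'I_n}) (c0 : 'I_n -> bool) x :
  n = h.*2.+1 -> #|U| <= h -> x \in U ->
  exists c : coloring n, {in U, forall u, c u = c0 u} /\ #|[set j | c j == c x]| = h.+1.
Proof.
move=> hn hU xU.
have h1 : #|U| <= (if c0 x then h.+1 else h) by case: (c0 x); lia.
have h2 : (if c0 x then h.+1 else h) <= n - #|U|.
  apply: leq_trans (leq_sub2l n hU); case: (c0 x); lia.
have [c [hc ht]] := balance c0 h1 h2.
exists c; split => //.
have ht' : #|[set j | c j == true]| = (if c0 x then h.+1 else h).
  by rewrite -ht; apply: eq_card => j; rewrite !inE eqb_id.
rewrite (hc x xU); move: ht'; case: (c0 x) => /= ht'; first exact: ht'.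
have := cls_compl c true; rewrite ht' /=; lia.
Qed.

Lemma count_or A (p q : pred A) s :
  count (fun a => p a || q a) s <= count p s + count q s.
Proof. elim: s => //= a s IH; case: (p a); case: (q a) => /=; lia. Qed.

Lemma cardsU1_le n (a : 'I_n) (A : {set 'I_n}) : #|a |: A| <= #|A|.+1.
Proof. by rewrite cardsU1; case: (a \notin A). Qed.

Lemma U_bound n k (x y : 'I_n) (Fs : seq {set 'I_n}) :
  (forall Q, Q \in Fs -> #|Q| = k) -> #|x |: (y |: bigU Fs)| <= (k * size Fs).+2.
Proof.
move=> h; apply: leq_trans (cardsU1_le _ _) _; rewrite ltnS.
apply: leq_trans (cardsU1_le _ _) _; rewrite ltnS; exact: card_bigU.
Qed.

Lemma odd_BM n k m2 (Qs : seq {set 'I_n}) :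
  2 < k -> odd n -> 3 + 2 * (k * m2) <= n ->
  (forall v (E : {set {set 'I_v}}), uniform k.-2 E -> ~ propertyB E -> m2 <= #|E|) ->
  successful_BM k Qs -> n.-1 * m2 <= 2 * (k * size Qs).
Proof.
move=> k2 od hn hm [hsz hdet].
rewrite leqNgt; apply/negP => hlt.
have [x [y [xy hxy]]] := @two_min n k m2 Qs ltac:(lia) hsz hlt.
set X : {set 'I_n} := [set x; y].
set Fs := filter (fun Q : {set 'I_n} => (x \in Q) || (y \in Q)) Qs.
have hFs : forall Q, Q \in Fs -> #|Q| = k by move=> Q; rewrite mem_filter => /andP[_ /hsz].
have hsF : size Fs < m2.
  rewrite size_filter; apply: leq_ltn_trans (count_or _ _ _) hxy.
set E : {set {set 'I_n}} := [set:: map (fun Q => pre k.-2 (Q :\: X)) Fs].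
have hE : #|E| < m2.
  apply: leq_ltn_trans (card_setseq _) _; rewrite size_map; exact hsF.
have hu : uniform k.-2 E.
  move=> e; rewrite in_set => /mapP[Q QF ->]; apply: card_pre.
  rewrite cardsD (hFs Q QF).
  have : #|Q :&: X| <= 2 by apply: leq_trans (subset_leq_card (subsetIr Q X)) _; rewrite cards2 xy.
  lia.
have [col hcol] : propertyB E.
  apply: NNPP => hn'; have := hm _ _ hu hn'; lia.
pose c0 := fun j => if j == y then col x else col j.
set U := x |: (y |: bigU Fs).
have hU := U_bound x y hFs.
set h := n./2.
have hn2 : n = h.*2.+1 by have := odd_double_half n; rewrite od.
have hUh : #|U| <= h.
  apply: leq_trans hU _.
  have : k * size Fs < k * m2 by rewrite ltn_pmul2l //; lia.
  lia.
have xU : x \in U by rewrite !in_setU1 eqxx.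
have yU : y \in U by rewrite !in_setU1 eqxx orbT.
have [c [hc hcls]] := odd_balance c0 hn2 hUh xU.
have cx : c x = col x by rewrite (hc x xU) /c0; case: (x == y).
have cy : c y = c x by rewrite cx (hc y yU) /c0 eqxx.
have hb : forall Q, Q \in Qs -> (x \in Q) || (y \in Q) -> bichromatic c (Q :\: X).
  move=> Q hQ xyQ.
  have QF : Q \in Fs by rewrite mem_filter xyQ hQ.
  apply: bichro_sub (pre_sub k.-2 (Q :\: X)) _.
  apply: (@bichro_col _ _ col (fun u => u)).
    have -> : [set (fun u => u) u | u in pre k.-2 (Q :\: X)] = pre k.-2 (Q :\: X) by apply: imset_id.
    by apply: hcol; rewrite in_set; apply/mapP; exists Q.
  move=> u hu0.
  have uQX := subsetP (pre_sub k.-2 (Q :\: X)) _ hu0.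
  have uQ : u \in Q by move: uQX; rewrite in_setD => /andP[].
  have uy : (u == y) = false.
    by apply/negbTE; apply: contraTneq uQX => ->; rewrite in_setD !inE eqxx orbT.
  rewrite (hc u); first by rewrite /c0 uy.
  by rewrite !in_setU1; apply/orP; right; apply/orP; right; apply: (subsetP (sub_bigU QF)).
apply: (@odd_conclude n h c x y (fun c' => all2 (admBM c') Qs (map (ansBM c X) Qs)) xy hn2 hcls cy).
- by rewrite all2_map_r; apply/allP => Q _; exact: BM_self.
- apply: BM_flip; first by rewrite !inE eqxx.
  by move=> Q hQ xQ; apply: hb => //; rewrite xQ.
- apply: BM_flip; first by rewrite !inE eqxx orbT.
  by move=> Q hQ yQ; apply: hb => //; rewrite yQ orbT.
- apply: (hdet c); rewrite all2_map_r; apply/allP => Q _; exact: BM_self.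
Qed.

Lemma phi_inj n (x y : 'I_n) (A : {set 'I_n}) : (x \notin A) || (y \notin A) ->
  {in A &, injective (fun j => if j == y then x else j)}.
Proof.
move=> hA j1 j2 h1 h2 /=.
case: (j1 =P y) => [e1|n1]; case: (j2 =P y) => [e2|n2] //.
- by rewrite e1 e2.
- move=> e; move: hA; by rewrite e -e1 h1 h2.
- move=> e; move: hA; by rewrite -e -e2 h1 h2.
Qed.

Lemma odd_GM n k m1 (Qs : seq {set 'I_n}) :
  2 < k -> odd n -> 3 + 2 * (k * m1) <= n ->
  (forall v (E : {set {set 'I_v}}), uniform k.-1 E -> ~ propertyB E -> m1 <= #|E|) ->
  successful_GM k Qs -> n.-1 * m1 <= 2 * (k * size Qs).
Proof.
move=> k2 od hn hm [hsz hdet].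
rewrite leqNgt; apply/negP => hlt.
have [x [y [xy hxy]]] := @two_min n k m1 Qs ltac:(lia) hsz hlt.
pose phi := fun j => if j == y then x else j.
set Fs := filter (fun Q : {set 'I_n} => (x \in Q) || (y \in Q)) Qs.
have hFs : forall Q, Q \in Fs -> #|Q| = k by move=> Q; rewrite mem_filter => /andP[_ /hsz].
have hsF : size Fs < m1.
  rewrite size_filter; apply: leq_ltn_trans (count_or _ _ _) hxy.
set E : {set {set 'I_n}} :=
  [set:: map (fun Q => phi @: (Q :\ x)) (filter (fun Q : {set 'I_n} => x \in Q) Qs)
      ++ map (fun Q => phi @: (Q :\ y)) (filter (fun Q : {set 'I_n} => y \in Q) Qs)].
have hE : #|E| < m1.
  apply: leq_ltn_trans (card_setseq _) _; rewrite size_cat !size_map !size_filter; exact hxy.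
have hu : uniform k.-1 E.
  move=> e; rewrite in_set mem_cat => /orP[] /mapP[Q]; rewrite mem_filter => /andP[xQ QQ] ->.
  + rewrite card_in_imset; last by apply: phi_inj; rewrite setD11.
    have := cardsD1 x Q; rewrite xQ (hsz Q QQ) /= => ->; by rewrite add1n.
  + rewrite card_in_imset; last by apply: phi_inj; rewrite setD11 orbT.
    have := cardsD1 y Q; rewrite xQ (hsz Q QQ) /= => ->; by rewrite add1n.
have [col hcol] : propertyB E.
  apply: NNPP => hn'; have := hm _ _ hu hn'; lia.
pose c0 := fun j => col (phi j).
set U := x |: (y |: bigU Fs).
have hU := U_bound x y hFs.
set h := n./2.
have hn2 : n = h.*2.+1 by have := odd_double_half n; rewrite od.
have hUh : #|U| <= h.
  apply: leq_trans hU _.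
  have : k * size Fs < k * m1 by rewrite ltn_pmul2l //; lia.
  lia.
have xU : x \in U by rewrite !in_setU1 eqxx.
have yU : y \in U by rewrite !in_setU1 eqxx orbT.
have [c [hc hcls]] := odd_balance c0 hn2 hUh xU.
have cx : c x = col x by rewrite (hc x xU) /c0 /phi; case: (x == y).
have cy : c y = c x by rewrite cx (hc y yU) /c0 /phi eqxx.
have hb : forall Q z, Q \in Qs -> z \in Q -> (z == x) || (z == y) ->
    phi @: (Q :\ z) \in E -> bichromatic c (Q :\ z).
  move=> Q z hQ zQ zxy hE'.
  have QF : Q \in Fs.
    rewrite mem_filter hQ andbT; by case/orP: zxy => /eqP e; rewrite -e zQ ?orbT.
  apply: (@bichro_col n c col phi (Q :\ z) (hcol _ hE')).
  move=> u hu0; rewrite (hc u) //.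
  rewrite !in_setU1; apply/orP; right; apply/orP; right; apply: (subsetP (sub_bigU QF)).
  by move: hu0; rewrite in_setD1 => /andP[].
apply: (@odd_conclude n h c x y (fun c' => all2 (admGM c') Qs (map (bichromatic c) Qs)) xy hn2 hcls cy).
- exact: GM_self.
- apply: GM_flip => Q hQ xQ; apply: hb => //; first by rewrite eqxx.
  by rewrite in_set mem_cat; apply/orP; left; apply/mapP; exists Q => //; rewrite mem_filter xQ.
- apply: GM_flip => Q hQ yQ; apply: hb => //; first by rewrite eqxx orbT.
  by rewrite in_set mem_cat; apply/orP; right; apply/mapP; exists Q => //; rewrite mem_filter yQ.
- apply: (hdet c); exact: GM_self.
Qed.

Lemma is_m_uniq j a b : is_m j a -> is_m j b -> a = b.
Proof.
move=> [[v [E [u [nb ca]]]] ma] [[v' [E' [u' [nb' cb]]]] mb].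
have := mb _ _ u nb; have := ma _ _ u' nb'; rewrite ca cb; lia.
Qed.

Lemma is_m_fix j : exists M, forall m, is_m j m -> m = M.
Proof.
case: (classic (exists m, is_m j m)) => [[m hm]|hne].
  by exists m => m' hm'; apply: is_m_uniq hm' hm.
exists 0 => m' hm'; exfalso; apply: hne; by exists m'.
Qed.

Local Open Scope ring_scope.

Lemma rat_bound (a b q d : nat) : (0 < d)%N -> (a * b <= d * q)%N ->
  a%:R / d%:R * b%:R <= q%:R :> rat.
Proof.
move=> d0 h; rewrite mulrAC ler_pdivrMr ?ltr0n // -!natrM ler_nat; lia.
Qed.

Theorem theorem10 (k : nat) (hk : (3 <= k)%N) :
  exists n0 : nat, forall n : nat, (n0 <= n)%N ->
  forall (m1 m2 NB NG : nat),
    is_m k.-1 m1 -> is_m k.-2 m2 ->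
    is_N_BM k n NB -> is_N_GM k n NG ->
    (~~ odd n -> f n k * m1%:R <= NB%:R :> rat /\ (NB <= NG)%N) /\
    (odd n -> f n k * m1%:R <= NG%:R :> rat /\ f n k * m2%:R <= NB%:R :> rat).
Proof.
have [M1 hM1] := is_m_fix k.-1.
have [M2 hM2] := is_m_fix k.-2.
exists (3 + 2 * (k * M1 + k * M2))%N => n hn m1 m2 NB NG h1 h2 hB hG.
have e1 := hM1 _ h1; have e2 := hM2 _ h2; subst M1 M2.
case: hB => [[QB [sB szB]] minB]; case: hG => [[QG [sG szG]] minG].
have hBG : (NB <= NG)%N by rewrite -szG; apply: minB; apply: GM_to_BM.
have k0 : (0 < k)%N by lia.
split => od.
  split => //.
  rewrite /f od /=; apply: rat_bound => //.
  rewrite -szB; apply: even_BM (proj2 h1) sB => //; lia.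
have n0 : (0 < n)%N by lia.
have -> : f n k = (n.-1)%:R / (2 * k)%N%:R.
  by rewrite /f od /= -subn1 natrB // natrM.
split; apply: rat_bound; try lia.
  rewrite -szG -mulnA; apply: odd_GM (proj2 h1) sG => //; lia.
rewrite -szB -mulnA; apply: odd_BM (proj2 h2) sB => //; lia.
Qed.
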